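(* Let $T$ be a block: tetrahedra $\Delta_1,\dots,\Delta_n$ all sharing a common edge $e$ with endpoints $x_1,x_2$, arranged cyclically around $e$, where for $i=1,\dots,n$ the tetrahedra $\Delta_i$ and $\Delta_{i+1}$ (indices mod $n$) are glued along a face $F_i$ containing $e$, and $e$ is not on the boundary. Let $N$ be normal coordinates on $T$ satisfying the matching equations. Build a directed graph $G$ with vertices $u_0,\dots,u_n,w_0,\dots,w_n$, where $u_i$ (resp. $w_i$) represents the normal arcs in $F_i$ crossing $e$ and separating $x_1$ (resp. $x_2$) from the other two vertices of $F_i$ (with $F_0=F_n$, but $u_0\neq u_n$ and $w_0\neq w_n$ as vertices of $G$). For each $i=1,\dots,n$, and each normal disk type in $\Delta_i$ meeting $e$, add one directed edge from the vertex of index $i-1$ corresponding to its arc in $F_{i-1}$ to the vertex of index $i$ corresponding to its arc in $F_i$ (so: triangle at $x_1$ gives $u_{i-1}\to u_i$, triangle at $x_2$ gives $w_{i-1}\to w_i$, and the two quadrilaterals meeting $e$ give $u_{i-1}\to w_i$ and $w_{i-1}\to u_i$), with capacity equal to the corresponding normal coordinate. Let $s_1=u_0$ and $t_1=u_n$. Then $N$ is immersible if and only if the maximum flow in $G$ from $s_1$ to $t_1$ equals the sum of the capacities of the edges leaving $s_1$.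
   Context: In a tetrahedron there are 7 normal disk types: 4 triangles (separating one vertex from the other three) and 3 quadrilaterals (separating two vertices from the other two); normal coordinates give the number of disks of each type in each tetrahedron. For a glued face and a normal arc type in it, the matching equation says the total number of disks (triangle plus quadrilateral) producing that arc on one side equals that on the other side. Placing the prescribed disks in general position (they may intersect), a global gluing is a choice, for each arc type in each glued face, of a bijection between disks on the two sides with that arc type; the glued result is a singular normal surface. $N$ is immersible if some global gluing yields an immersed surface, i.e., one with no branch point; in a block, a branch point occurs exactly when some closed curve formed by the glued normal disks meeting $e$ winds more than once around $e$. A flow from $s$ to $t$ in a directed graph with nonnegative integer capacities is a collection of directed $s$–$t$ paths using each edge $a$ at most $c(a)$ times; a maximum flow maximizes the number of paths. *)

(* Defs.v *)
From HB Require Import structures.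
From mathcomp Require Import all_boot.
Set Implicit Arguments. Unset Strict Implicit. Unset Printing Implicit Defensive.

(* Block T: tetrahedra Delta_0, ..., Delta_(n-1) (0-indexed; Delta_j here is  *)
(* the paper's Delta_(j+1)) around the edge e = x1 x2.  Delta_j has vertices  *)
(* x1, x2, p_j ("back" vertex) and q_j ("front" vertex).  Its back face       *)
(* {x1,x2,p_j} and front face {x1,x2,q_j} are the two faces containing e.     *)
(* The front face of Delta_j is glued to the back face of Delta_(j+1 mod n)   *)
(* (x1 -> x1, x2 -> x2, q_j -> p_(j+1)); this glued face is the paper's       *)
(* F_(j+1) (F_n = F_0).  All other faces are boundary faces.                  *)

Inductive dtype :=
| TX1  (* triangle at x1 *)
| TX2  (* triangle at x2 *)
| TP   (* triangle at p_j *)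
| TQ   (* triangle at q_j *)
| QUW  (* quad separating {x1,q_j} from {x2,p_j} *)
| QWU  (* quad separating {x1,p_j} from {x2,q_j} *)
| QE.  (* quad separating {x1,x2} from {p_j,q_j} (does not meet e) *)

Definition dt2n (d : dtype) : nat :=
  match d with TX1 => 0 | TX2 => 1 | TP => 2 | TQ => 3 | QUW => 4 | QWU => 5 | QE => 6 end.
Definition dt_enum := [:: TX1; TX2; TP; TQ; QUW; QWU; QE].
Lemma dt2nK : pcancel dt2n (fun k => nth None (map Some dt_enum) k).
Proof. by case. Qed.
HB.instance Definition _ := Countable.copy dtype (pcan_type dt2nK).
Lemma dt_enumP : Finite.axiom dt_enum. Proof. by case. Qed.
HB.instance Definition _ := isFinite.Build dtype dt_enumP.

(* Normal arc types in a face {x1, x2, c} containing e: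
   A1 separates x1, A2 separates x2, AC separates the third vertex c. *)
Inductive arc := A1 | A2 | AC.
Definition arc2n (a : arc) : nat := match a with A1 => 0 | A2 => 1 | AC => 2 end.
Lemma arc2nK : pcancel arc2n (fun k => nth None [:: Some A1; Some A2; Some AC] k).
Proof. by case. Qed.
HB.instance Definition _ := Countable.copy arc (pcan_type arc2nK).

(* Arc of a disk type in the back face of its tetrahedron (None: disk misses it). *)
Definition back (d : dtype) : option arc :=
  match d with
  | TX1 => Some A1 | TX2 => Some A2 | TP => Some AC | TQ => None
  | QUW => Some A1 | QWU => Some A2 | QE => Some AC end.
Definition front (d : dtype) : option arc :=
  match d with
  | TX1 => Some A1 | TX2 => Some A2 | TP => None | TQ => Some AC
  | QUW => Some A2 | QWU => Some A1 | QE => Some AC end.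

Definition meets_e (d : dtype) : bool :=
  match d with TX1 | TX2 | QUW | QWU => true | _ => false end.

Definition matching (n : nat) (N : 'I_n -> dtype -> nat) : Prop :=
  forall (j : 'I_n) (a : arc),
    \sum_(d : dtype | front d == Some a) N j d
    = \sum_(d : dtype | back d == Some a) N (ordS j) d.

(* Individual normal disks (placed in general position): the k-th disk of
   type d in Delta_j, for k < N j d. *)
Definition disk (n : nat) (N : 'I_n -> dtype -> nat) :=
  {j : 'I_n & {d : dtype & 'I_(N j d)}}.
Arguments disk : clear implicits.
Definition dtet n N (D : disk n N) : 'I_n := projT1 D.
Definition ddt n N (D : disk n N) : dtype := projT1 (projT2 D).

(* A global gluing, encoded as the map sigma sending each disk having an arc
   in the front face of its tetrahedron to the disk it is glued to across that
   face.  The conditions say exactly that for each glued face and each arc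
   type a in it, sigma restricts to a bijection between the disks of Delta_j
   with front arc a and the disks of Delta_(j+1) with back arc a.  (The value
   of sigma on disks with no front arc is irrelevant.) *)
Definition gluing n N (sigma : disk n N -> disk n N) : Prop :=
  [/\ (forall D, front (ddt D) <> None ->
          dtet (sigma D) = ordS (dtet D) /\ back (ddt (sigma D)) = front (ddt D)),
      (forall D D', front (ddt D) <> None -> front (ddt D') <> None ->
          sigma D = sigma D' -> D = D')
    & (forall D', back (ddt D') <> None ->
          exists D, front (ddt D) <> None /\ sigma D = D')].

(* The closed curve through a disk D meeting e is formed by the glued disks
   of its sigma-orbit; its winding number around e is the number of times it
   passes through the tetrahedron of D. *)
Definition winding n N (sigma : disk n N -> disk n N) (D : disk n N) : nat :=
  count (fun D' => dtet D' == dtet D) (orbit sigma D).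

(* N is immersible: some global gluing has no branch point, i.e. no closed
   curve of glued disks meeting e winds more than once around e. *)
Definition immersible n (N : 'I_n -> dtype -> nat) : Prop :=
  exists sigma : disk n N -> disk n N,
    gluing sigma /\ forall D, meets_e (ddt D) -> winding sigma D <= 1.

Fixpoint walk (V : eqType) (E : Type) (src tgt : E -> V) (s : V) (p : seq E) (t : V)
  : bool :=
  match p with
  | [::] => s == t
  | e :: p' => (src e == s) && walk src tgt (tgt e) p' t
  end.

Definition st_path (V : eqType) (E : Type) (src tgt : E -> V) (s t : V) (p : seq E)
  : bool := walk src tgt s p t && uniq (s :: map tgt p).

Definition is_flow (V E : eqType) (src tgt : E -> V) (c : E -> nat) (s t : V)
  (P : seq (seq E)) : Prop :=
  all (st_path src tgt s t) P /\ forall e, \sum_(p <- P) count_mem e p <= c e.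

Definition max_flow_eq (V E : eqType) (src tgt : E -> V) (c : E -> nat) (s t : V)
  (v : nat) : Prop :=
  (exists P, is_flow src tgt c s t P /\ size P = v) /\
  (forall P, is_flow src tgt c s t P -> size P <= v).

(* The graph G of the block.  Vertices: (false, k) = u_k, (true, k) = w_k,  *)
(* k = 0..n.  Edges: one for each tetrahedron Delta_j (paper Delta_(j+1))   *)
(* and each disk type d meeting e, from the index-j vertex of its back arc  *)
(* to the index-(j+1) vertex of its front arc, with capacity N j d.         *)
Definition gvert (n : nat) := (bool * 'I_n.+1)%type.
Definition gedge (n : nat) := {x : ('I_n * dtype)%type | meets_e x.2}.

(* side of an arc crossing e: A1 -> u (false), A2 -> w (true) *)
Definition side (a : option arc) : bool := a == Some A2.

Definition gsrc n (x : gedge n) : gvert n :=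
  (side (back (val x).2), widen_ord (leqnSn n) (val x).1).
Definition gtgt n (x : gedge n) : gvert n :=
  (side (front (val x).2), lift ord0 (val x).1).
Definition gcap n (N : 'I_n -> dtype -> nat) (x : gedge n) : nat :=
  N (val x).1 (val x).2.

(* Main.v *)
Require Import Defs.
From HB Require Import structures.
From mathcomp Require Import all_boot zify.
Set Implicit Arguments. Unset Strict Implicit. Unset Printing Implicit Defensive.

Lemma sum_dt (F : dtype -> nat) : \sum_(d : dtype) F d = F TX1 + (F TX2 + (F TP + (F TQ + (F QUW + (F QWU + (F QE + 0)))))).
Proof. have E : index_enum dtype = dt_enum by rewrite /index_enum !unlock. by rewrite unlock E. Qed.

Definition typ (s s' : bool) : dtype :=
  match s, s' with
  | false, false => TX1 | true, true => TX2 | false, true => QUW | true, false => QWU end.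
Definition sb d := side (back d).
Definition sf d := side (front d).

Lemma typ_meets s s' : meets_e (typ s s'). Proof. by case: s; case: s'. Qed.
Lemma sb_typ s s' : sb (typ s s') = s. Proof. by case: s; case: s'. Qed.
Lemma sf_typ s s' : sf (typ s s') = s'. Proof. by case: s; case: s'. Qed.
Lemma typ_sbf d : meets_e d -> typ (sb d) (sf d) = d. Proof. by case: d. Qed.
Lemma eback d : meets_e d -> back d = Some (if sb d then Defs.A2 else Defs.A1). Proof. by case: d. Qed.
Lemma efront d : meets_e d -> front d = Some (if sf d then Defs.A2 else Defs.A1). Proof. by case: d. Qed.
Lemma back_e d : back d <> None -> back d <> Some Defs.AC -> meets_e d. Proof. by case: d. Qed.
Lemma front_e d : front d <> None -> front d <> Some Defs.AC -> meets_e d. Proof. by case: d. Qed.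
Lemma e_front d : meets_e d -> front d <> None /\ front d <> Some Defs.AC. Proof. by case: d. Qed.
Lemma e_back d : meets_e d -> back d <> None /\ back d <> Some Defs.AC. Proof. by case: d. Qed.
Lemma ne_front d : ~~ meets_e d -> front d <> None -> front d = Some Defs.AC. Proof. by case: d. Qed.

Section S.
Variables (n : nat) (N : 'I_n -> dtype -> nat).

Definition dix (D : disk n N) : nat := val (projT2 (projT2 D)).

Lemma disk_ext (D D' : disk n N) : dtet D = dtet D' -> ddt D = ddt D' -> dix D = dix D' -> D = D'.
Proof.
case: D => j [d i]; case: D' => j' [d' i']; rewrite /dtet /ddt /dix /= => E1 E2 E3.
subst j' d'. by rewrite (val_inj E3).
Qed.

Lemma dix_lt (D : disk n N) : dix D < N (dtet D) (ddt D).
Proof. by case: D => j [d i]; rewrite /dix /=. Qed.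

Lemma card_disk (j : 'I_n) (Q : pred dtype) :
  #|[pred D : disk n N | (dtet D == j) && Q (ddt D)]| = \sum_(d | Q d) N j d.
Proof.
rewrite -sum1_card.
rewrite -(@sig_big_dep _ _ _ _ (fun i => {d : dtype & 'I_(N i d)}) (pred1 j) (fun i x => Q (tag x)) (fun _ _ => 1)) /=.
rewrite big_pred1_eq.
transitivity (\sum_(p : {d : dtype & 'I_(N j d)} | Q (tag p) && xpredT (tagged p)) 1).
  by apply: eq_bigl => p; rewrite andbT.
rewrite -(@sig_big_dep _ _ _ _ (fun d => 'I_(N j d)) Q (fun _ _ => true) (fun _ _ => 1)) /=.
by apply: eq_bigr => d _; rewrite sum1_card card_ord.
Qed.

Lemma ordS_val (j : 'I_n) : val (ordS j) = if j.+1 < n then j.+1 else 0.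
Proof.
rewrite /ordS /=. case: ifP => h; first by rewrite modn_small.
have -> : j.+1 = n by apply/eqP; rewrite eqn_leq ltn_ord leqNgt h.
by rewrite modnn.
Qed.

Lemma ordS_inj : injective (@ordS n).
Proof. apply: (can_inj (g := @ord_pred n)). exact: ordSK. Qed.

End S.

Section T.
Variables (n : nat) (Hn : 0 < n) (N : 'I_n -> dtype -> nat) (Hmatch : matching N).
Lemma match_typ (j : 'I_n) s' : N j (typ false s') + N j (typ true s') = N (ordS j) (typ s' false) + N (ordS j) (typ s' true).
Proof.
have := Hmatch j (if s' then Defs.A2 else Defs.A1).
rewrite big_mkcond [in X in _ = X]big_mkcond !sum_dt /=. by case: s' => /= h; lia.
Qed.

Lemma csum : \sum_(x : gedge n | gsrc x == (false, ord0)) gcap N x = N (Ordinal Hn) TX1 + N (Ordinal Hn) QUW.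
Proof.
have := (@big_sub_cond _ _ addn _ [pred y : 'I_n * dtype | meets_e y.2] (fun y => (side (back y.2), widen_ord (leqnSn n) y.1) == (false, ord0)) (fun y => N y.1 y.2)).
move=> /= <-.
rewrite (eq_bigl (fun y => (y.1 == Ordinal Hn) && (meets_e y.2 && (sb y.2 == false)))); last first.
  move=> [j d] /=. rewrite !inE /= xpair_eqE /sb. 
  have -> : (widen_ord (leqnSn n) j == ord0) = (j == Ordinal Hn) by apply/eqP/eqP => h; apply/val_inj; move/(congr1 val): h.
  by case: (j == _); case: (meets_e d); case: (side _ == _).
rewrite -(pair_big_dep (fun j => j == Ordinal Hn) (fun _ d => meets_e d && (sb d == false)) (fun j d => N j d)) /=.
rewrite big_pred1_eq big_mkcond sum_dt /=. by rewrite !addn0 ?add0n.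
Qed.
End T.

Lemma onth_some (T : eqType) (s : seq T) i : i < size s -> uniq s ->
  exists y, [/\ onth s i = Some y, y \in s & index y s = i].
Proof.
move=> hi us. case E: (onth s i) => [y|]; last by move: (onthTE s i); rewrite E hi.
exists y; have hn := onth_nth y y s i E. split => //; first by rewrite -hn mem_nth.
by rewrite -hn index_uniq.
Qed.

Lemma onth_index (T : eqType) (s : seq T) y : y \in s -> onth s (index y s) = Some y.
Proof.
move=> ys. have hi : index y s < size s by rewrite index_mem.
case E: (onth s (index y s)) => [z|]; last by move: (onthTE s (index y s)); rewrite E hi.
by rewrite -(onth_nth y z _ _ E) nth_index.
Qed.

Section Glue.
Variables (n : nat) (N : 'I_n -> dtype -> nat) (Hmatch : matching N).
Variables (L : finType) (S : L -> nat -> bool).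
Hypothesis HScl : forall y, S y n = S y 0.
Definition AL (j : nat) (d : dtype) := [pred y : L | (S y j == sb d) && (S y j.+1 == sf d)].
Hypothesis HScnt : forall (j : 'I_n) d, meets_e d -> #|AL j d| = N j d.

Local Notation disk := (disk n N).

Definition lab (D : disk) : option L := onth (enum (AL (dtet D) (ddt D))) (dix D).

Definition unlab (j : 'I_n) (y : L) (D0 : disk) : disk :=
  let d := typ (S y j) (S y j.+1) in
  match @insub _ (fun k => k < N j d) _ (index y (enum (AL j d))) with
  | Some o => existT (fun j => {d : dtype & 'I_(N j d)}) j (existT (fun d => 'I_(N j d)) d o)
  | None => D0 end.

Definition FAC (j : 'I_n) := [pred D : disk | (dtet D == j) && (front (ddt D) == Some Defs.AC)].
Definition BAC (j : 'I_n) := [pred D : disk | (dtet D == j) && (back (ddt D) == Some Defs.AC)].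

Definition sigm (D : disk) : disk :=
  if meets_e (ddt D) then
    (if lab D is Some y then unlab (ordS (dtet D)) y D else D)
  else nth D (enum (BAC (ordS (dtet D)))) (index D (enum (FAC (dtet D)))).

Lemma S_ordS y (j : 'I_n) : S y (ordS j) = S y j.+1.
Proof. rewrite ordS_val; case: ifP => // h. have -> : j.+1 = n by apply/eqP; rewrite eqn_leq ltn_ord leqNgt h. by rewrite HScl. Qed.

Lemma lab_e (D : disk) : meets_e (ddt D) ->
  exists y, [/\ lab D = Some y, y \in AL (dtet D) (ddt D) & index y (enum (AL (dtet D) (ddt D))) = dix D].
Proof.
move=> he. have hi : dix D < size (enum (AL (dtet D) (ddt D))).
  by rewrite -cardE HScnt // dix_lt.
have [y [h1 h2 h3]] := onth_some hi (enum_uniq _).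
by exists y; split => //; rewrite mem_enum in h2.
Qed.

Lemma unlab_spec j y D0 :
  [/\ dtet (unlab j y D0) = j, ddt (unlab j y D0) = typ (S y j) (S y j.+1)
    & dix (unlab j y D0) = index y (enum (AL j (typ (S y j) (S y j.+1))))].
Proof.
rewrite /unlab. set d := typ _ _.
have hin : y \in enum (AL j d) by rewrite mem_enum /AL inE /d sb_typ sf_typ !eqxx.
have hi : index y (enum (AL j d)) < N j d.
  by rewrite -HScnt /d ?typ_meets // cardE index_mem.
by rewrite insubT.
Qed.

Lemma unlab_D0 j y D0 D1 : unlab j y D0 = unlab j y D1.
Proof.
have [a1 a2 a3] := unlab_spec j y D0; have [b1 b2 b3] := unlab_spec j y D1.
by apply: disk_ext; rewrite ?a1 ?a2 ?a3 ?b1 ?b2 ?b3.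
Qed.

Lemma lab_unlab j y D0 : lab (unlab j y D0) = Some y.
Proof.
have [a1 a2 a3] := unlab_spec j y D0. rewrite /lab a1 a2 a3.
by apply: onth_index; rewrite mem_enum /AL inE sb_typ sf_typ !eqxx.
Qed.

Lemma unlab_lab (D D0 : disk) y : meets_e (ddt D) -> lab D = Some y -> unlab (dtet D) y D0 = D.
Proof.
move=> he hl. have [y' [h1 h2 h3]] := lab_e he. rewrite hl in h1; case: h1 => <- in h2 h3.
have [a1 a2 a3] := unlab_spec (dtet D) y D0.
move: h2; rewrite /AL /= => /andP [/eqP e1 /eqP e2].
have Ed : typ (S y (dtet D)) (S y (dtet D).+1) = ddt D by rewrite e1 e2 typ_sbf.
apply: disk_ext; rewrite ?a1 ?a2 ?a3 ?Ed //.
Qed.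

Lemma sig_e (D : disk) : meets_e (ddt D) -> exists y, lab D = Some y /\ sigm D = unlab (ordS (dtet D)) y D.
Proof. move=> he; have [y [h1 _ _]] := lab_e he. by exists y; rewrite /sigm he h1. Qed.


Lemma card_FAC j : #|FAC j| = #|BAC (ordS j)|.
Proof.
rewrite /FAC /BAC (card_disk N j (fun d => front d == Some Defs.AC)).
by rewrite (card_disk N (ordS j) (fun d => back d == Some Defs.AC)) Hmatch.
Qed.

Lemma sig_ne (D : disk) : ~~ meets_e (ddt D) ->
  sigm D = nth D (enum (BAC (ordS (dtet D)))) (index D (enum (FAC (dtet D)))).
Proof. by rewrite /sigm => /negbTE ->. Qed.

Lemma glue1 (D : disk) : front (ddt D) <> None ->
  dtet (sigm D) = ordS (dtet D) /\ back (ddt (sigm D)) = front (ddt D).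
Proof.
move=> hf. case he: (meets_e (ddt D)).
  have [y [h1 h2 h3]] := lab_e he.
  have [y' [h1' ->]] := sig_e he. rewrite h1 in h1'; case: h1' => <-.
  have [a1 a2 a3] := unlab_spec (ordS (dtet D)) y D.
  split => //. rewrite a2 (eback (typ_meets _ _)) sb_typ (efront he) S_ordS.
  by move: h2; rewrite /AL inE => /andP [_ /eqP ->].
have hAC := ne_front (negbT he) hf.
have hD : D \in enum (FAC (dtet D)) by rewrite mem_enum inE eqxx hAC eqxx.
have hk : index D (enum (FAC (dtet D))) < size (enum (BAC (ordS (dtet D)))).
  by rewrite -cardE -card_FAC cardE index_mem.
have := mem_nth D hk; rewrite (sig_ne (negbT he)) mem_enum inE => /andP [/eqP -> /eqP ->].
by rewrite hAC.
Qed.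

Lemma sig_eback (D : disk) : meets_e (ddt D) -> meets_e (ddt (sigm D)).
Proof.
move=> he. have [y [_ ->]] := sig_e he. have [_ -> _] := unlab_spec (ordS (dtet D)) y D.
exact: typ_meets.
Qed.

Lemma glue2 (D D' : disk) : front (ddt D) <> None -> front (ddt D') <> None ->
  sigm D = sigm D' -> D = D'.
Proof.
move=> hf hf' E.
have [t1 b1] := glue1 hf; have [t2 b2] := glue1 hf'.
have Ej : dtet D = dtet D' by apply: (@ordS_inj n); rewrite -t1 -t2 E.
case he: (meets_e (ddt D)); case he': (meets_e (ddt D')).
- have [y [h1 h2]] := sig_e he; have [y' [h1' h2']] := sig_e he'.
  have : lab (sigm D) = lab (sigm D') by rewrite E.
  rewrite h2 h2' !lab_unlab => -[Ey]. subst y'.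
  by rewrite -(unlab_lab D he h1) -(unlab_lab D' he' h1') Ej (unlab_D0 _ _ _ D').
- have := sig_eback he; rewrite E => he2.
  have [_ hb] := e_back he2. by case: hb; rewrite b2 (ne_front (negbT he') hf').
- have := sig_eback he'; rewrite -E => he2.
  have [_ hb] := e_back he2. by case: hb; rewrite b1 (ne_front (negbT he) hf).
have hAC := ne_front (negbT he) hf; have hAC' := ne_front (negbT he') hf'.
have hD : D \in enum (FAC (dtet D)) by rewrite mem_enum inE eqxx hAC eqxx.
have hD' : D' \in enum (FAC (dtet D)) by rewrite mem_enum inE Ej eqxx hAC' eqxx.
have hk : index D (enum (FAC (dtet D))) < size (enum (BAC (ordS (dtet D)))).
  by rewrite -cardE -card_FAC cardE index_mem.
have hk' : index D' (enum (FAC (dtet D))) < size (enum (BAC (ordS (dtet D)))).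
  by rewrite -cardE -card_FAC cardE index_mem.
move: E; rewrite (sig_ne (negbT he)) (sig_ne (negbT he')) -Ej.
rewrite (set_nth_default D' D hk) => /eqP; rewrite nth_uniq ?enum_uniq // => /eqP Ei.
by rewrite -(nth_index D hD) Ei nth_index.
Qed.

Lemma glue3 (D' : disk) : back (ddt D') <> None -> exists D, front (ddt D) <> None /\ sigm D = D'.
Proof.
move=> hb. set j := ord_pred (dtet D').
have hj : ordS j = dtet D' by rewrite /j ord_predK.
case he': (meets_e (ddt D')).
  have [y [h1 _ _]] := lab_e he'.
  exists (unlab j y D'). have [a1 a2 a3] := unlab_spec j y D'.
  have heD : meets_e (ddt (unlab j y D')) by rewrite a2 typ_meets.
  split; first by have [] := e_front heD.
  have [y' [h1' ->]] := sig_e heD. rewrite lab_unlab in h1'; case: h1' => <-.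
  by rewrite a1 hj (unlab_D0 _ _ _ D') (unlab_lab D' he' h1).
have hAC : back (ddt D') = Some Defs.AC.
  by move: hb he'; case: (ddt D').
have hD' : D' \in enum (BAC (dtet D')) by rewrite mem_enum inE eqxx hAC eqxx.
have hk : index D' (enum (BAC (dtet D'))) < size (enum (FAC j)).
  by rewrite -cardE card_FAC hj cardE index_mem.
set D := nth D' (enum (FAC j)) (index D' (enum (BAC (dtet D')))).
have hD : D \in FAC j by rewrite -mem_enum mem_nth.
move: hD; rewrite inE => /andP [/eqP tD /eqP fD].
exists D; split; first by rewrite fD.
have heD : ~~ meets_e (ddt D) by move: fD; case: (ddt D).
rewrite (sig_ne heD) tD hj /D index_uniq ?enum_uniq //.
by rewrite (set_nth_default D' D) ?nth_index // index_mem.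
Qed.

Lemma glue : gluing sigm.
Proof. split; [exact: glue1 | exact: glue2 | exact: glue3]. Qed.

Lemma iter_sig (D : disk) y k : meets_e (ddt D) -> lab D = Some y ->
  iter k sigm D = unlab (iter k (@ordS n) (dtet D)) y D.
Proof.
move=> he hl. elim: k => [|k IH] /=; first by rewrite (unlab_lab D he hl).
rewrite IH. have [a1 a2 _] := unlab_spec (iter k (@ordS n) (dtet D)) y D.
have heD : meets_e (ddt (unlab (iter k (@ordS n) (dtet D)) y D)) by rewrite a2 typ_meets.
have [y' [h1 ->]] := sig_e heD. rewrite lab_unlab in h1; case: h1 => <-.
by rewrite a1 (unlab_D0 _ _ _ D).
Qed.

Lemma wind (D : disk) : meets_e (ddt D) -> winding sigm D <= 1.
Proof.
move=> he. have [y [hl _ _]] := lab_e he.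
rewrite /winding.
rewrite (@eq_in_count _ _ (fun D' => (dtet D' == dtet D) && (D' == D))); last first.
  move=> D' hD'. rewrite -fconnect_orbit in hD'.
  have := iter_findex hD'. rewrite (iter_sig _ he hl) => hE.
  case: eqP => //= hT. apply/esym/eqP. rewrite -hE.
  have [a1 _ _] := unlab_spec (iter (findex sigm D D') (@ordS n) (dtet D)) y D.
  by rewrite -hE a1 in hT; rewrite hT unlab_lab.
apply: (@leq_trans (count (pred1 D) (orbit sigm D))).
  by apply: sub_count => x /andP [_ /eqP ->] /=.
by rewrite count_uniq_mem ?orbit_uniq //; case: (_ \in _).
Qed.

Lemma immersible_of : immersible N.
Proof. exists sigm; split; [exact: glue | exact: wind]. Qed.

End Glue.

Lemma count_idx (T : eqType) (s : seq T) k : uniq s ->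
  count (fun l => index l s < k) s = minn k (size s).
Proof.
elim: s k => [|x s IH] k /=; first by rewrite minn0.
case/andP => xs us. rewrite eqxx.
rewrite (@eq_in_count _ _ (fun l => index l s < k.-1)); last first.
  move=> l ls. have -> : (x == l) = false by apply/eqP => E; rewrite E ls in xs.
  by case: k.
rewrite IH //. case: k => [|k] /=; first by rewrite min0n.
by rewrite minnSS add1n.
Qed.

Lemma card_AQ (T : finType) (A Q : pred T) :
  #|[pred l | A l && Q l]| = count Q (enum A).
Proof.
rewrite cardE /enum_mem size_filter /= count_filter.
by apply: eq_count => x /=; rewrite andbC.
Qed.

Lemma card_split (T : finType) (A Q : pred T) :
  #|[pred l | A l]| = #|[pred l | A l && Q l]| + #|[pred l | A l && ~~ Q l]|.
Proof.
rewrite !card_AQ count_predC cardE.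
by congr size; apply: eq_enum => x; rewrite !inE.
Qed.

Section Rank.
Variables (K : nat) (r : nat -> bool -> bool -> nat).

Fixpoint xf (j : nat) : 'I_K -> bool :=
  match j with
  | 0 => fun _ => true
  | j'.+1 => fun l =>
      let s := xf j' l in
      index l (enum [pred l' | xf j' l' == s]) < r j' s true
  end.

Variables (m : nat) (a : nat -> bool -> nat).
Hypothesis Ha0 : forall s, a 0 s = if s then K else 0.
Hypothesis Hout : forall j s, j < m -> r j s false + r j s true = a j s.
Hypothesis Hin : forall j s', a j.+1 s' = r j false s' + r j true s'.

Lemma xf_step j : (forall s, #|[pred l | xf j l == s]| = a j s) -> j < m ->
  forall s s', #|[pred l | (xf j l == s) && (xf j.+1 l == s')]| = r j s s'.
Proof.
move=> Hc hj s s'.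
have E : #|[pred l | (xf j l == s) && (xf j.+1 l == s')]| =
   #|[pred l | (xf j l == s) && ((index l (enum [pred l' | xf j l' == s]) < r j s true) == s')]|.
  apply: eq_card => l /=; rewrite !inE. case h: (xf j l == s) => //=. by move/eqP: h => ->.
rewrite E card_AQ. have Hs := Hc s. rewrite -(Hout s hj) cardE in Hs.
set A := enum _ in Hs *.
have hT : count (fun l => index l A < r j s true) A = r j s true.
  by rewrite count_idx ?enum_uniq // Hs; apply/minn_idPl; rewrite leq_addl.
clear E; case: s'.
  by rewrite -[RHS]hT; apply: eq_count => l /=; rewrite eqb_id.
rewrite (@eq_count _ _ (predC (fun l => index l A < r j s true))); last by move=> l /=; rewrite eqbF_neg.
rewrite -(count_predC (fun l => index l A < r j s true)) hT in Hs.
by apply/eqP; rewrite -(eqn_add2l (r j s true)) Hs addnC.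
Qed.


Lemma xf_cnt j : j <= m -> forall s, #|[pred l | xf j l == s]| = a j s.
Proof.
elim: j => [|j IH] hj s.
  rewrite Ha0; case: s.
    by rewrite -[RHS](card_ord K); apply: eq_card.
  by apply: eq_card0 => l.
have hj' : j < m by [].
rewrite (card_split _ (fun l => xf j l == false)) Hin.
have IH' := IH (ltnW hj').
rewrite -(xf_step IH' hj' false s) -(xf_step IH' hj' true s).
congr addn; apply: eq_card => l; rewrite !inE andbC //.
by case: (xf j l).
Qed.

Lemma xf_pair j s s' : j < m -> #|[pred l | (xf j l == s) && (xf j.+1 l == s')]| = r j s s'.
Proof. move=> hj; apply: xf_step => //; apply: xf_cnt; exact: ltnW. Qed.
End Rank.

Lemma walk_nth (V : eqType) (E : Type) (src tgt : E -> V) s p t (e : E) :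
  walk src tgt s p t ->
  (forall k, k < size p -> src (nth e p k) = nth s (s :: map tgt p) k) /\ last s (map tgt p) = t.
Proof.
elim: p s => [|x p IH] s /=; first by move=> /eqP ->.
case/andP => /eqP hs /IH [h1 h2]; split => // -[|k] //= hk.
by rewrite h1 // (set_nth_default (tgt x)) //= size_map ltnW.

Qed.

Lemma count_nth (T : Type) (x0 : T) (p : seq T) (a : pred T) :
  count a p = count (fun k => a (nth x0 p k)) (iota 0 (size p)).
Proof. by rewrite -{1}(mkseq_nth x0 p) /mkseq count_map. Qed.

Lemma count_iota1 m j (b : nat -> bool) : j < m -> (forall k, k < m -> k != j -> b k = false) ->
  count b (iota 0 m) = b j.
Proof.
move=> hj hb. rewrite (@eq_in_count _ _ (fun k => (k == j) && b j)); last first.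
  move=> k; rewrite mem_iota add0n => hk; case: eqP => [->|/eqP ne] //. by rewrite hb.
case: (b j); last by rewrite (@eq_count _ _ pred0) ?count_pred0 // => k; rewrite andbF.
rewrite (@eq_count _ _ (pred1 j)) ?count_uniq_mem ?iota_uniq ?mem_iota ?add0n ?hj // => k.
by rewrite andbT.
Qed.

Lemma card_nth (T : Type) (x0 : T) (s : seq T) (Q : pred T) :
  #|[pred l : 'I_(size s) | Q (nth x0 s l)]| = count Q s.
Proof.
rewrite cardE /enum_mem size_filter -enumT (count_nth x0 s) -val_enum_ord count_map.
by apply: eq_count.
Qed.

Lemma count_split2 (T : Type) (a b : pred T) s :
  count a s = count (fun x => a x && b x) s + count (fun x => a x && ~~ b x) s.
Proof. elim: s => //= x s ->; case: (a x); case: (b x) => /=; lia. Qed.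

Lemma typ_eq d1 d2 : meets_e d1 -> meets_e d2 -> (d1 == d2) = (sb d1 == sb d2) && (sf d1 == sf d2).
Proof. by case: d1; case: d2. Qed.

Lemma sum_bool (T : Type) (b : pred T) (s : seq T) : \sum_(x <- s) (b x : nat) = count b s.
Proof. by rewrite -sum1_count [RHS]big_mkcond; apply: eq_bigr => x _; case: (b x). Qed.

Section Flow.
Variables (n : nat) (Hn : 0 < n) (N : 'I_n -> dtype -> nat) (Hmatch : matching N).

Definition s0 : gvert n := (false, ord0).
Definition t0 : gvert n := (false, ord_max).
Definition e0 : gedge n := exist (fun x : 'I_n * dtype => meets_e x.2) (Ordinal Hn, TX1) isT.
Definition ge (j : 'I_n) d : gedge n := insubd e0 (j, d).
Lemma ge_val j d : meets_e d -> val (ge j d) = (j, d).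
Proof. by move=> h; rewrite /ge insubdK. Qed.

Definition vs (p : seq (gedge n)) := s0 :: map (@gtgt n) p.
Definition pside p k := (nth s0 (vs p) k).1.

Lemma path_props p : st_path (@gsrc n) (@gtgt n) s0 t0 p -> size p = n /\ forall k, k < n ->
  [/\ gsrc (nth e0 p k) = nth s0 (vs p) k, gtgt (nth e0 p k) = nth s0 (vs p) k.+1
    & val (val (nth e0 p k)).1 = k].
Proof.
case/andP => hw _. have [h1 h2] := walk_nth e0 hw.
have ht k : k < size p -> gtgt (nth e0 p k) = nth s0 (vs p) k.+1.
  by move=> hk; rewrite /vs /= (nth_map e0).
have hidx : forall k, k <= size p -> val (nth s0 (vs p) k).2 = k.
  elim=> [|k IH] hk //. rewrite -ht //.
  have := IH (ltnW hk); rewrite -[vs p]/(s0 :: _) -h1 // /gsrc /gtgt /= => ->. by rewrite /bump add1n.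
have hsz : size p = n.
  move: h2; rewrite (last_nth s0) -/(vs p) size_map => E.
  by have := hidx (size p) (leqnn _); rewrite E.
split => // k hk. rewrite -hsz in hk.
split; [exact: h1 | exact: ht |].
by rewrite -[RHS](hidx k (ltnW hk)) -h1.
Qed.

Lemma pside_n p : st_path (@gsrc n) (@gtgt n) s0 t0 p -> pside p n = false.
Proof.
move=> hp. have [hsz _] := path_props hp. case/andP: hp => hw _.
have [_ h2] := walk_nth e0 hw. move: h2; rewrite (last_nth s0) size_map hsz.
by rewrite /pside /vs => ->.
Qed.

Lemma count_ge p (j : 'I_n) d : st_path (@gsrc n) (@gtgt n) s0 t0 p -> meets_e d ->
  count_mem (ge j d) p = (pside p j == sb d) && (pside p j.+1 == sf d).
Proof.
move=> hp he. have [hsz hk] := path_props hp.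
rewrite (count_nth e0) hsz (@count_iota1 n j); first last.
- move=> k kn kj. apply/eqP => E. have [_ _ h3] := hk k kn.
  by move: h3; rewrite E ge_val //= => ej; rewrite ej eqxx in kj.
- exact: ltn_ord.
have [h1 h2 h3] := hk j (ltn_ord j).
set x := nth e0 p j in h1 h2 h3 *.
rewrite /pside -h1 -h2 /gsrc /gtgt /= -val_eqE ge_val //.
clearbody x. case: x h1 h2 h3 => [[a b] hb] /= _ _ h3.
have -> : a = j by apply: val_inj.
by rewrite xpair_eqE eqxx /= typ_eq.
Qed.

Variable P : seq (seq (gedge n)).
Hypothesis hP : is_flow (@gsrc n) (@gtgt n) (gcap N) s0 t0 P.
Hypothesis hsz : size P = \sum_(x : gedge n | gsrc x == (false, ord0)) gcap N x.

Lemma hPp p : p \in P -> st_path (@gsrc n) (@gtgt n) s0 t0 p.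
Proof. by case: hP => /allP h _; apply: h. Qed.

Definition fc j s s' := count (fun p => (pside p j == s) && (pside p j.+1 == s')) P.

Lemma fc_le (j : 'I_n) s s' : fc j s s' <= N j (typ s s').
Proof.
case: hP => _ /(_ (ge j (typ s s'))). rewrite /gcap ge_val ?typ_meets //=.
rewrite (eq_big_seq (fun p => ((pside p j == s) && (pside p j.+1 == s') : nat))) ?sum_bool //.
by move=> p /hPp hp; rewrite count_ge ?typ_meets // sb_typ sf_typ.
Qed.

Definition Nn (j : nat) d := if @insub _ (fun k => k < n) _ j is Some o then N o d else 0.
Lemma Nn_val (o : 'I_n) d : Nn o d = N o d.
Proof. by rewrite /Nn valK. Qed.


Lemma fc_split j s' : fc j false s' + fc j true s' = count (fun p => pside p j.+1 == s') P.
Proof.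
rewrite (count_split2 _ (fun p => pside p j == false)) /fc; congr addn; apply: eq_count => p /=;
  rewrite andbC //; by case: (pside p j).
Qed.

Lemma fc_split' j s : fc j s false + fc j s true = count (fun p => pside p j == s) P.
Proof.
rewrite (count_split2 _ (fun p => pside p j.+1 == false)) /fc; congr addn; apply: eq_count => p /=;
  by case: (pside p j.+1).
Qed.

Lemma cnt0 : count (fun p => pside p 0 == false) P = size P.
Proof. by rewrite (@eq_count _ _ predT) ?count_predT. Qed.

Lemma cntn : count (fun p => pside p n == false) P = size P.
Proof. by rewrite (@eq_in_count _ _ predT) ?count_predT // => p /hPp /pside_n ->. Qed.

Lemma Nn_ord j (hj : j < n) d : Nn j d = N (Ordinal hj) d.
Proof. by rewrite -Nn_val. Qed.

Definition rr j s s' := Nn j (typ s s') - fc j s s'.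
Definition KK := rr 0 true false + rr 0 true true.
Definition aa j s := if j is j'.+1 then rr j' false s + rr j' true s else (if s then KK else 0).

Lemma fc_leN j (hj : j < n) s s' : fc j s s' <= Nn j (typ s s').
Proof. by rewrite (Nn_ord hj); exact: (fc_le (Ordinal hj)). Qed.

Lemma c_val : size P = Nn 0 (typ false false) + Nn 0 (typ false true).
Proof. by rewrite hsz csum !(Nn_ord Hn). Qed.

Lemma Hout j s : j < n -> rr j s false + rr j s true = aa j s.
Proof.
case: j => [|j] hj.
  case: s => //=. have h1 := fc_leN hj false false; have h2 := fc_leN hj false true.
  have h3 := fc_split' 0 false. rewrite cnt0 c_val in h3. rewrite /rr. lia.
have hj' : j < n by apply: ltnW.
have hm := match_typ Hn Hmatch (Ordinal hj') s.
have hS : ordS (Ordinal hj') = Ordinal hj by apply: val_inj; rewrite ordS_val /= hj.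
rewrite hS -!(Nn_ord hj) -!(Nn_ord hj') in hm.
have := fc_split j s; have := fc_split' j.+1 s => e1 e2.
have := fc_leN hj s false; have := fc_leN hj s true;
have := fc_leN hj' false s; have := fc_leN hj' true s.
rewrite -e2 in e1. move=> a1 a2 a3 a4; rewrite /aa /rr; lia.
Qed.

Lemma aa_n : aa n false = 0.
Proof.
case E: n Hn => [|m] // _.
have hm : m < n by rewrite E.
have := match_typ Hn Hmatch (Ordinal hm) false.
have hS : ordS (Ordinal hm) = Ordinal Hn by apply: val_inj; rewrite ordS_val /= -E ltnn.
rewrite hS -!(Nn_ord hm) -!(Nn_ord Hn) => hmt.
have := fc_split m false. rewrite -E cntn c_val => e1.
have := fc_leN hm false false; have := fc_leN hm true false.
move=> a1 a2; rewrite E /aa /rr; lia.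
Qed.

Definition LL := ('I_(size P) + 'I_KK)%type.
Definition SS (y : LL) k := match y with inl l => pside (nth [::] P l) k | inr l => @xf KK rr k l end.

Lemma xf_cnt' j s : j <= n -> #|[pred l | @xf KK rr j l == s]| = aa j s.
Proof. move=> hj. exact: (@xf_cnt KK rr n aa (fun s => erefl _) Hout (fun j s => erefl _) j hj s). Qed.

Lemma xf_n l : @xf KK rr n l = true.
Proof.
have h := xf_cnt' false (leqnn n). rewrite aa_n in h.
have := card0_eq h l. rewrite !inE. by case: (@xf KK rr n l).
Qed.

Lemma SScl y : SS y n = SS y 0.
Proof.
case: y => [l|l] /=; last by rewrite xf_n.
rewrite pside_n //; apply: hPp; exact: mem_nth.
Qed.

Lemma SScnt (j : 'I_n) d : meets_e d -> #|AL SS j d| = N j d.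
Proof.
move=> he. rewrite -sum1_card big_sumType /=.
have -> : \sum_(i < size P | inl i \in AL SS j d) 1 = #|[pred l : 'I_(size P) | AL SS j d (inl l)]|.
  by rewrite -sum1_card; apply: eq_bigl.
have -> : \sum_(i < KK | inr i \in AL SS j d) 1 = #|[pred l : 'I_KK | AL SS j d (inr l)]|.
  by rewrite -sum1_card; apply: eq_bigl.
have -> : #|[pred l : 'I_(size P) | AL SS j d (inl l)]| = fc j (sb d) (sf d).
  rewrite /fc -(card_nth [::]). by apply: eq_card.
have -> : #|[pred l : 'I_KK | AL SS j d (inr l)]| = rr j (sb d) (sf d).
  rewrite -(@xf_pair KK rr n aa (fun s => erefl _) Hout (fun j s => erefl _) j (sb d) (sf d) (ltn_ord j)).
  by apply: eq_card.
rewrite /rr Nn_val typ_sbf //. have := fc_le j (sb d) (sf d). rewrite typ_sbf //. lia.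
Qed.

Lemma imm_of_flow : immersible N.
Proof. exact: (immersible_of Hmatch SScl SScnt). Qed.
End Flow.

Lemma flow_ub (V : eqType) (E : finType) (src tgt : E -> V) (c : E -> nat) s t P :
  s != t -> is_flow src tgt c s t P -> size P <= \sum_(x | src x == s) c x.
Proof.
move=> hst [hall hc].
have h : forall p, p \in P -> 1 <= \sum_(x | src x == s) count_mem x p.
  move=> p /(allP hall) /andP [hw _]. case: p hw => [|e p] /=.
    by move/eqP => Est; rewrite Est eqxx in hst.
  case/andP => /eqP hs _. rewrite (bigD1 e) ?hs ?eqxx //=.
rewrite -sum1_size big_seq.
apply: (@leq_trans (\sum_(p <- P | p \in P) \sum_(x | src x == s) count_mem x p)); first exact: leq_sum.
rewrite -big_seq exchange_big /=. apply: leq_sum => x _. exact: hc.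
Qed.

Lemma walk_iota (V : eqType) (E : Type) (src tgt : E -> V) (g : nat -> E) t k :
  forall m s, 0 < k -> src (g m) = s -> (forall i, m <= i -> i.+1 < m + k -> tgt (g i) = src (g i.+1)) ->
  tgt (g (m + k).-1) = t -> walk src tgt s (map g (iota m k)) t.
Proof.
elim: k => [|k IH] // m s _ hs hmid hend /=. rewrite hs eqxx /=.
case: k IH hmid hend => [|k] IH hmid hend.
  by rewrite /= -hend addn1.
apply: IH => //.
- by rewrite hmid //; lia.
- by move=> i hi hi'; apply: hmid; lia.
- by rewrite -hend; congr (tgt (g _)); lia.
Qed.

Section Imm.
Variables (n : nat) (Hn : 0 < n) (N : 'I_n -> dtype -> nat).
Variable (sg : disk n N -> disk n N).
Hypothesis Hg : gluing sg.
Hypothesis Hw : forall D, meets_e (ddt D) -> winding sg D <= 1.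

Local Notation j0 := (Ordinal Hn).

Lemma sg_e D : meets_e (ddt D) ->
  [/\ meets_e (ddt (sg D)), dtet (sg D) = ordS (dtet D) & sb (ddt (sg D)) = sf (ddt D)].
Proof.
move=> he. have [hf hf'] := e_front he. case: Hg => /(_ D hf) [h1 h2] _ _.
split => //; last by rewrite /sb /sf h2.
by apply: back_e; rewrite h2.
Qed.

Lemma iter_e k D : meets_e (ddt D) ->
  meets_e (ddt (iter k sg D)) /\ dtet (iter k sg D) = iter k (@ordS n) (dtet D).
Proof.
move=> he; elim: k => [|k [IH1 IH2]] //=.
have [a1 a2 _] := sg_e IH1. by rewrite a2 IH2.
Qed.

Lemma iter_ordS_val k (j : 'I_n) : val (iter k (@ordS n) j) = (j + k) %% n.
Proof.
elim: k => [|k IH] /=; first by rewrite addn0 modn_small.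
rewrite /ordS /= IH -addn1 modnDml addn1 addnS //.
Qed.

Lemma iter_inj k D D' : meets_e (ddt D) -> meets_e (ddt D') -> iter k sg D = iter k sg D' -> D = D'.
Proof.
move=> he he'. elim: k => [|k IH] //= E. apply: IH.
have [h1 _] := iter_e k he; have [h1' _] := iter_e k he'.
case: Hg => _ hi _. apply: hi E; by have [] := e_front h1; have [] := e_front h1'.
Qed.

Lemma count2 (T : eqType) (p : pred T) (s : seq T) x y :
  uniq s -> x \in s -> y \in s -> p x -> p y -> x != y -> 2 <= count p s.
Proof.
move=> us xs ys px py nxy.
apply: (@leq_trans (count (predU (pred1 x) (pred1 y)) s)); last first.
  by apply: sub_count => z /orP [] /eqP ->.
have := count_predUI (pred1 x) (pred1 y) s.
rewrite (@eq_count _ (predI _ _) pred0) ?count_pred0; last first.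
  move=> z /=. case: eqP => // ->. by rewrite (negbTE nxy).
by rewrite addn0 !count_uniq_mem // xs ys => ->.
Qed.

Lemma iter_n D : meets_e (ddt D) -> iter n sg D = D.
Proof.
move=> he. apply/eqP; apply/negP => /negP hne.
have [_ ht] := iter_e n he.
have hv : dtet (iter n sg D) = dtet D.
  by apply: val_inj; rewrite ht iter_ordS_val modnDr modn_small.
have := Hw he. rewrite /winding.
have := @count2 _ (fun D' => dtet D' == dtet D) (orbit sg D) D (iter n sg D) (orbit_uniq _ _).
rewrite -!fconnect_orbit connect0 fconnect_iter hv eqxx eq_sym => /(_ isT isT isT isT hne).
by case: (count _ _) => [|[|]].
Qed.

Definition eo (D : disk n N) : gedge n := insubd (e0 Hn) (dtet D, ddt D).
Lemma eo_val D : meets_e (ddt D) -> val (eo D) = (dtet D, ddt D).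
Proof. by move=> h; rewrite /eo insubdK. Qed.

Definition pathOf D := map (fun k => eo (iter k sg D)) (iota 0 n).
Definition A0 := [pred D : disk n N | (dtet D == j0) && (back (ddt D) == Some Defs.A1)].
Definition PP := map pathOf (enum A0).

Lemma A0_e D : A0 D -> meets_e (ddt D) /\ sb (ddt D) = false.
Proof. by case/andP => _; case: (ddt D). Qed.

Lemma tet_iter D k : D \in A0 -> k < n -> val (dtet (iter k sg D)) = k.
Proof.
move=> hD hk. have [he _] := A0_e hD. have [_ ->] := iter_e k he.
move: hD; rewrite inE => /andP [/eqP -> _].
by rewrite iter_ordS_val add0n modn_small.
Qed.

Lemma path_st D : D \in A0 -> st_path (@gsrc n) (@gtgt n) (s0 n) (t0 n) (pathOf D).
Proof.
move=> hD. have [he hsb] := A0_e hD.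
have hie k : meets_e (ddt (iter k sg D)) by have [] := iter_e k he.
apply/andP; split.
  apply: walk_iota => //.
  - rewrite /gsrc eo_val //=. rewrite -/(sb _) hsb. congr pair; apply: val_inj => /=.
    by move: hD; rewrite inE => /andP [/eqP -> _].
  - move=> i _ hi. rewrite /gsrc /gtgt !eo_val //=.
    have [_ _ hs] := sg_e (hie i). rewrite -[side (back _)]/(sb _) hs.
    congr pair. apply: val_inj => /=. rewrite -[sg (iter i sg D)]/(iter i.+1 sg D).
    rewrite /bump /= add1n tet_iter //; last exact: ltnW.
      by rewrite -[sg (iter i sg D)]/(iter i.+1 sg D) tet_iter.
    exact: (hie i.+1).
  - have hn1 : (0 + n).-1 < n by rewrite add0n prednK // leqnn.
    rewrite /gtgt eo_val //=. congr pair.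
      have [_ _ hs] := sg_e (hie (0 + n).-1).
      rewrite -[side (front _)]/(sf _) -hs -[sg (iter _ sg D)]/(iter (0 + n).-1.+1 sg D).
      by rewrite add0n prednK // iter_n.
    apply: val_inj => /=. rewrite /bump /= add1n tet_iter // add0n prednK //.
rewrite /pathOf -map_comp.
apply: (@map_uniq _ _ (fun v : gvert n => val v.2)).
rewrite /= -map_comp (_ : map _ (iota 0 n) = map succn (iota 0 n)); last first.
  apply/eq_in_map => k; rewrite mem_iota add0n => hk /=. by rewrite eo_val //= /bump /= add1n tet_iter.
apply/andP; split; last by rewrite map_inj_uniq ?iota_uniq //; exact: succn_inj.
by apply/mapP => -[k _].
Qed.

Lemma cap_ok e : \sum_(p <- PP) count_mem e p <= gcap N e.
Proof.
rewrite big_map. case: e => [[je de] hde]. set e := (exist (fun x : 'I_n * dtype => meets_e x.2) (je, de) hde : gedge n).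
rewrite (eq_big_seq (fun D => (eo (iter je sg D) == e : nat))); last first.
  move=> D; rewrite mem_enum => hD. rewrite /pathOf count_map.
  rewrite (@count_iota1 n je) //. move=> k hk hkj /=. apply/negbTE/eqP => E.
  have [he _] := A0_e hD. have [hie _] := iter_e k he.
  have := congr1 (fun x => val (val x).1) E. rewrite eo_val //= tet_iter // => ek.
  by rewrite ek eqxx in hkj.
rewrite sum_bool -card_AQ.
set f := iter je sg.
have hinj : {in [pred D | A0 D && (eo (f D) == e)] &, injective f}.
  move=> D D' /andP [hD _] /andP [hD' _]. apply: iter_inj; [exact: (A0_e hD).1 | exact: (A0_e hD').1].
rewrite -(card_in_image hinj).
apply: (@leq_trans #|[pred D' : disk n N | (dtet D' == je) && (pred1 de (ddt D'))]|).
  apply: subset_leq_card; apply/subsetP => y /imageP [x hx ->]. move: hx; rewrite inE => /andP [hx /eqP E].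
  have [he _] := A0_e hx. have [hie _] := iter_e je he.
  have := congr1 val E. rewrite eo_val //= => -[E1 E2]. by rewrite inE E1 E2 !eqxx.
by rewrite card_disk big_pred1_eq.
Qed.

Lemma size_PP : size PP = N j0 TX1 + N j0 QUW.
Proof.
rewrite size_map -cardE (card_disk N j0 (fun d => back d == Some Defs.A1)).
by rewrite big_mkcond sum_dt /= !addn0 ?add0n.
Qed.

Lemma flow_of_imm :
  max_flow_eq (@gsrc n) (@gtgt n) (gcap N) (false, ord0) (false, ord_max)
    (\sum_(x : gedge n | gsrc x == (false, ord0)) gcap N x).
Proof.
split.
  exists PP; split; last by rewrite size_PP csum.
  split; last exact: cap_ok.
  apply/allP => p /mapP [D hD ->]. rewrite mem_enum in hD. exact: path_st.
move=> P hP. apply: flow_ub hP. rewrite xpair_eqE eqxx /= -val_eqE /=.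
by rewrite eq_sym -lt0n.
Qed.
End Imm.

Unset Implicit Arguments.
Theorem lemma13 (n : nat) (Hn : 0 < n) (N : 'I_n -> dtype -> nat)
  (Hmatch : matching N) :
  immersible N <->
  max_flow_eq (@gsrc n) (@gtgt n) (gcap N) (false, ord0) (false, ord_max)
    (\sum_(x : gedge n | gsrc x == (false, ord0)) gcap N x).
Proof.
split.
  case=> sg [hg hw]. exact: (flow_of_imm Hn hg hw).
case=> [[P [hP hs]] _]. exact: (imm_of_flow Hn Hmatch hP hs).
Qed.
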